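(* Assume the setting described in the context and suppose the event $\mathcal{E}$ holds. There is an absolute constant $C>0$ such that the following holds. Let $p\in\{1,\dots,k-1\}$ and $\gamma\in(0,1)$, let $S^{(p)}\subseteq[n]$ with $|S^{(p)}|=p$, let $\hat{\mathbf{e}}^{(p)}$ be a unit eigenvector for the largest eigenvalue of $\hat{\boldsymbol{\Gamma}}_{S^{(p)},S^{(p)}}$ zero-padded to $\mathbb{R}^n$, and let $S^{(p+1)}$ be the index set of the $p+1$ largest entries of $|\hat{\boldsymbol{\Gamma}}\hat{\mathbf{e}}^{(p)}|$. If $$ m\ \ge\ C\frac{(1+\theta)^2}{\theta^2\gamma^2(1-\sqrt\gamma)^2}(p+1)s^2(p+1)\log n\quad\text{and}\quad \|\mathbf{v}_{S^{(p)}}\|_2\ \ge\ \sqrt{\frac{\gamma}{s(p)}}, $$ then $$ \|\mathbf{v}_{S^{(p+1)}}\|_2\ \ge\ \sqrt{\frac{\gamma}{s(p+1)}}. $$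
   Context: Let $n\ge 2$, $m\ge1$, $\theta>0$, $k\in[n]$; $\mathbf{v}\in\mathbb{R}^n$ a unit vector with at most $k$ nonzero entries; $\mathbf{x}_1,\dots,\mathbf{x}_m$ i.i.d. $\mathcal{N}(\mathbf{0},\mathbf{I}_n+\theta\mathbf{v}\mathbf{v}^\top)$; $\hat{\boldsymbol{\Gamma}}=\frac1m\sum_i\mathbf{x}_i\mathbf{x}_i^\top-\mathbf{I}_n$; $\mathbf{W}=\hat{\boldsymbol{\Gamma}}-\theta\mathbf{v}\mathbf{v}^\top$. $\mathbf{v}_S$ is the restriction of $\mathbf{v}$ to $S$, $\mathbf{A}_{S,U}$ a submatrix, $\|\cdot\|_2$ Euclidean/spectral norm. $v_{(1)}\ge v_{(2)}\ge\cdots$ are the sorted absolute entries of $\mathbf{v}$ and $s(p)=(\sum_{i=1}^pv_{(i)}^2)^{-1}$ for $1\le p\le k$. Fix an absolute constant $C_0>0$; $\mathcal{E}$ is the event that $\|\mathbf{W}_{S,S}\|_2\le C_0(1+\theta)\sqrt{|S|\log n/m}$ for all nonempty $S\subseteq[n]$. Absolute constants do not depend on $n,m,k,p,\theta,\mathbf{v},\gamma$. *)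

(* Defs.v *)
From HB Require Import structures.
From mathcomp Require Import all_boot all_order all_algebra.
From mathcomp Require Import all_classical all_reals all_analysis.
Set Implicit Arguments. Unset Strict Implicit. Unset Printing Implicit Defensive.
Import Order.TTheory GRing.Theory Num.Theory.
Local Open Scope ring_scope.
Local Open Scope classical_set_scope.

Section Defs.
Variable R : realType.

Definition normS n (S : {set 'I_n}) (u : 'cV[R]_n) : R :=
  Num.sqrt (\sum_(i in S) u i 0 ^+ 2).

Definition norm2 n (u : 'cV[R]_n) : R := normS [set: 'I_n] u.

(* u vanishes outside S (zero-padded vector of R^S) *)
Definition supported_on n (S : {set 'I_n}) (u : 'cV[R]_n) : Prop :=
  forall i, i \notin S -> u i 0 = 0.

(* spectral (operator) norm of the principal submatrix A_{S,S}:
   sup of ||A_{S,S} y||_2 over unit y in R^S, with y written zero-padded *)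
Definition spec_norm_sub n (A : 'M[R]_n) (S : {set 'I_n}) : R :=
  sup [set r | exists u : 'cV[R]_n,
        [/\ supported_on S u, norm2 u = 1 & r = normS S (A *m u)]].

(* (mu, u) is an eigenpair of A_{S,S}, with the eigenvector u zero-padded *)
Definition is_sub_eigenpair n (A : 'M[R]_n) (S : {set 'I_n}) (mu : R)
  (u : 'cV[R]_n) : Prop :=
  [/\ supported_on S u, u != 0 &
      forall i, i \in S -> (A *m u) i 0 = mu * u i 0].

Definition top_sub_eigvec n (A : 'M[R]_n) (S : {set 'I_n}) (e : 'cV[R]_n)
  : Prop :=
  norm2 e = 1 /\
  exists lam : R, is_sub_eigenpair A S lam e /\
    forall mu u, is_sub_eigenpair A S mu u -> mu <= lam.

(* T is an index set of the q largest entries of |a| (ties broken arbitrarily) *)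
Definition top_abs_set n (a : 'cV[R]_n) (q : nat) (T : {set 'I_n}) : Prop :=
  #|T| = q /\ forall i j, i \in T -> j \notin T -> `|a j 0| <= `|a i 0|.

Definition sorted_abs n (v : 'cV[R]_n) : seq R :=
  sort (fun x y : R => y <= x) [seq `|v i 0| | i <- enum 'I_n].

Definition s_fun n (v : 'cV[R]_n) (p : nat) : R :=
  (\sum_(x <- take p (sorted_abs v)) x ^+ 2)^-1.

Definition Gamma_hat n m (x : 'I_m -> 'cV[R]_n) : 'M[R]_n :=
  (m%:R)^-1 *: (\sum_(i < m) x i *m (x i)^T) - 1%:M.

Definition W_mat n m (theta : R) (v : 'cV[R]_n) (x : 'I_m -> 'cV[R]_n)
  : 'M[R]_n := Gamma_hat x - theta *: (v *m v^T).

Definition event_E n m (C0 theta : R) (v : 'cV[R]_n) (x : 'I_m -> 'cV[R]_n)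
  : Prop :=
  forall S : {set 'I_n}, (0 < #|S|)%N ->
    spec_norm_sub (W_mat theta v x) S
      <= C0 * (1 + theta) * Num.sqrt (#|S|%:R * ln (n%:R : R) / m%:R).

Definition nnz n (v : 'cV[R]_n) : nat := #|[set i | v i 0 != 0]|.

End Defs.

(* Main.v *)
Require Import Defs.
From HB Require Import structures.
From mathcomp Require Import all_boot all_order all_algebra.
From mathcomp Require Import all_classical all_reals all_analysis.
From mathcomp Require Import ring lra zify.
Set Implicit Arguments. Unset Strict Implicit. Unset Printing Implicit Defensive.
Import Order.TTheory GRing.Theory Num.Theory.
Import numFieldNormedType.Exports.
Local Open Scope ring_scope.
Lemma cs_sum (R : realType) (I : finType) (P : pred I) (f g : I -> R) :
  (\sum_(i | P i) f i * g i) ^+ 2 <=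
  (\sum_(i | P i) f i ^+ 2) * (\sum_(i | P i) g i ^+ 2).
Proof.
set A := \sum_(i | P i) f i ^+ 2; set B := \sum_(i | P i) g i ^+ 2.
set C := \sum_(i | P i) f i * g i.
have H0 : 0 <= \sum_(i | P i) (B * f i - C * g i) ^+ 2.
  by apply: sumr_ge0 => i _; exact: sqr_ge0.
have E : \sum_(i | P i) (B * f i - C * g i) ^+ 2 = B * (A * B - C ^+ 2).
  rewrite (eq_bigr (fun i => B^+2 * f i ^+2 - (2 * B * C) * (f i * g i)
     + C^+2 * g i ^+ 2)); last by move=> i _; ring.
  rewrite big_split /= sumrB -!mulr_sumr -/A -/B -/C; ring.
have B0 : 0 <= B by apply: sumr_ge0 => i _; exact: sqr_ge0.
case: (eqVneq B 0) => [Bz|Bnz].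
  have g0 : forall i, P i -> g i = 0.
    move=> i Pi; apply/eqP; rewrite -sqrf_eq0; apply/eqP.
    by apply: (psumr_eq0P _ Bz) => // j _; exact: sqr_ge0.
  have -> : C = 0 by rewrite /C big1 // => i Pi; rewrite g0 ?mulr0.
  by rewrite expr0n /= Bz mulr0.
have Bp : 0 < B by rewrite lt_def Bnz B0.
rewrite E in H0; rewrite -subr_ge0; by rewrite pmulr_rge0 in H0.
Qed.

Lemma sqrt_le_sum (R : realType) (x y : R) : 0 <= y -> x <= y ^+ 2 -> Num.sqrt x <= y.
Proof.
move=> y0 h; rewrite -[y](ger0_norm y0) -sqrtr_sqr ler_sqrt //; exact: sqr_ge0.
Qed.

Lemma mink_sum (R : realType) (I : finType) (P : pred I) (f g : I -> R) :
  Num.sqrt (\sum_(i | P i) (f i + g i) ^+ 2) <=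
  Num.sqrt (\sum_(i | P i) f i ^+ 2) + Num.sqrt (\sum_(i | P i) g i ^+ 2).
Proof.
set A := \sum_(i | P i) f i ^+ 2; set B := \sum_(i | P i) g i ^+ 2.
set C := \sum_(i | P i) f i * g i.
have A0 : 0 <= A by apply: sumr_ge0 => i _; exact: sqr_ge0.
have B0 : 0 <= B by apply: sumr_ge0 => i _; exact: sqr_ge0.
apply: sqrt_le_sum; first by rewrite addr_ge0 ?sqrtr_ge0.
have -> : \sum_(i | P i) (f i + g i) ^+ 2 = A + 2 * C + B.
  rewrite (eq_bigr (fun i => f i ^+ 2 + 2 * (f i * g i) + g i ^+ 2));
    last by move=> i _; ring.
  by rewrite !big_split /= -mulr_sumr.
have CS : C <= Num.sqrt A * Num.sqrt B.
  rewrite -sqrtrM //; apply: le_trans (ler_norm C) _.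
  rewrite -sqrtr_sqr ler_sqrt; first exact: cs_sum.
  exact: mulr_ge0.
rewrite sqrrD !sqr_sqrtr //; lra.
Qed.

Lemma sum_in_le (R : realType) n (S : {set 'I_n}) (F : 'I_n -> R) :
  (forall i, 0 <= F i) -> \sum_(i in S) F i <= \sum_i F i.
Proof.
move=> F0; rewrite [X in _ <= X](bigID (mem S)) /= lerDl.
by apply: sumr_ge0 => i _.
Qed.

Lemma sum_in_supp (R : realType) n (S : {set 'I_n}) (F : 'I_n -> R) :
  (forall i, i \notin S -> F i = 0) -> \sum_(i in S) F i = \sum_i F i.
Proof.
move=> F0; rewrite [X in _ = X](bigID (mem S)) /= [X in _ = _ + X]big1 ?addr0 //.

Qed.

Lemma normS_ge0 (R : realType) n (S : {set 'I_n}) (u : 'cV[R]_n) : 0 <= normS S u.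
Proof. exact: sqrtr_ge0. Qed.

Lemma normS_sq (R : realType) n (S : {set 'I_n}) (u : 'cV[R]_n) :
  normS S u ^+ 2 = \sum_(i in S) u i 0 ^+ 2.
Proof. rewrite sqr_sqrtr //; apply: sumr_ge0 => i _; exact: sqr_ge0. Qed.

Lemma norm2_sq (R : realType) n (u : 'cV[R]_n) :
  norm2 u ^+ 2 = \sum_i u i 0 ^+ 2.
Proof. rewrite /norm2 normS_sq; apply: eq_bigl => i; by rewrite finset.in_setT. Qed.

Lemma normS_sub (R : realType) n (S T : {set 'I_n}) (u : 'cV[R]_n) :
  S \subset T -> normS S u <= normS T u.
Proof.
move=> ST; rewrite /normS ler_sqrt; last by apply: sumr_ge0 => i _; exact: sqr_ge0.
rewrite [X in _ <= X](big_setID S) /=; move/finset.setIidPr: ST => ->.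
by rewrite lerDl; apply: sumr_ge0 => i _; exact: sqr_ge0.
Qed.

Lemma normS_supp (R : realType) n (S : {set 'I_n}) (u : 'cV[R]_n) :
  supported_on S u -> normS S u = norm2 u.
Proof.
move=> su; rewrite /norm2 /normS; congr Num.sqrt.
rewrite sum_in_supp; last by move=> i /su ->; rewrite expr0n.
by apply: eq_bigl => i; rewrite finset.in_setT.
Qed.

Lemma normS_scale (R : realType) n (S : {set 'I_n}) (c : R) (u : 'cV[R]_n) :
  normS S (c *: u) = `|c| * normS S u.
Proof.
rewrite /normS (eq_bigr (fun i => c ^+ 2 * u i 0 ^+ 2)); last first.
  by move=> i _; rewrite mxE exprMn.
rewrite -mulr_sumr sqrtrM ?sqr_ge0 // sqrtr_sqr //.
Qed.

Lemma norm2_eq0 (R : realType) n (u : 'cV[R]_n) : norm2 u = 0 -> u = 0.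
Proof.
move=> h; have : \sum_i u i 0 ^+ 2 = 0 by rewrite -norm2_sq h expr0n.
move=> /psumr_eq0P h2; apply/matrixP => i j; rewrite ord1 mxE.
apply/eqP; rewrite -sqrf_eq0; apply/eqP; apply: h2 => // k _; exact: sqr_ge0.
Qed.

Lemma spec_ub (R : realType) n (A : 'M[R]_n) (S : {set 'I_n}) (u : 'cV[R]_n) :
  supported_on S u -> norm2 u = 1 -> normS S (A *m u) <= spec_norm_sub A S.
Proof.
move=> su nu; rewrite /spec_norm_sub; apply: ub_le_sup; last by exists u.
exists (Num.sqrt (\sum_i \sum_j A i j ^+ 2)) => r [w [sw nw ->]].
rewrite /normS ler_sqrt; last first.
  by apply: sumr_ge0 => i _; apply: sumr_ge0 => j _; exact: sqr_ge0.
have w1 : \sum_j w j 0 ^+ 2 = 1 by rewrite -norm2_sq nw expr1n.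
apply: (@le_trans _ _ (\sum_(i in S) \sum_j A i j ^+ 2)); last first.
  by apply: sum_in_le => i; apply: sumr_ge0 => j _; exact: sqr_ge0.
apply: ler_sum => i _; rewrite mxE.
have := cs_sum (fun _ => true) (fun j => A i j) (fun j => w j 0).
by rewrite /= w1 mulr1.
Qed.

Lemma spec_ge0 (R : realType) n (A : 'M[R]_n) (S : {set 'I_n}) (u : 'cV[R]_n) :
  supported_on S u -> norm2 u = 1 -> 0 <= spec_norm_sub A S.
Proof. move=> su nu; apply: le_trans (spec_ub A su nu); exact: normS_ge0. Qed.

Lemma spec_ub_gen (R : realType) n (A : 'M[R]_n) (S : {set 'I_n}) (u : 'cV[R]_n) :
  supported_on S u -> normS S (A *m u) <= spec_norm_sub A S * norm2 u.
Proof.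
move=> su; case: (eqVneq (norm2 u) 0) => [/norm2_eq0 ->|nz].
  rewrite mulmx0 /norm2 /normS !big1 ?sqrtr0 ?mulr0 // => i _; by rewrite mxE expr0n.
have rp : 0 < norm2 u by rewrite lt_def nz sqrtr_ge0.
set u' := (norm2 u)^-1 *: u.
have su' : supported_on S u' by move=> i /su h; rewrite mxE h mulr0.
have nu' : norm2 u' = 1.
  rewrite /norm2 normS_scale -/(norm2 u) ger0_norm ?mulVf //.
  by rewrite invr_ge0 ltW.
have := spec_ub A su' nu'; rewrite /u' -scalemxAr normS_scale.
rewrite ger0_norm; last by rewrite invr_ge0 ltW.
move=> h.
have := ler_wpM2l (ltW rp) h; rewrite mulrA mulfV ?mul1r //.
by rewrite mulrC.
Qed.

Lemma qf_bound (R : realType) n (A : 'M[R]_n) (S : {set 'I_n}) (u : 'cV[R]_n) :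
  supported_on S u ->
  `|\sum_i u i 0 * (A *m u) i 0| <= spec_norm_sub A S * norm2 u ^+ 2.
Proof.
move=> su; rewrite -(@sum_in_supp _ _ S); last by move=> i /su ->; rewrite mul0r.
rewrite -sqrtr_sqr.
apply: (@le_trans _ _ (Num.sqrt ((\sum_(i in S) u i 0 ^+2) *
   (\sum_(i in S) (A *m u) i 0 ^+ 2)))).
  rewrite ler_sqrt; first exact: (@cs_sum _ _ (fun i => i \in S)).
  by apply: mulr_ge0; apply: sumr_ge0 => i _; exact: sqr_ge0.
rewrite sqrtrM; last by apply: sumr_ge0 => i _; exact: sqr_ge0.
rewrite -/(normS S u) -/(normS S (A *m u)) (normS_supp su).
rewrite expr2 mulrA [X in _ <= X * _]mulrC -mulrA; apply: ler_wpM2l; first exact: sqrtr_ge0.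
exact: spec_ub_gen.
Qed.

Lemma sum_delta (R : realType) n (F : 'I_n -> R) (i : 'I_n) :
  \sum_j F j * (j == i)%:R = F i.
Proof.
rewrite (bigD1 i) //= eqxx mulr1 big1 ?addr0 // => j /negbTE ->; by rewrite mulr0.
Qed.

Lemma sum_delta1 (R : realType) n (i : 'I_n) :
  \sum_j (j == i)%:R = 1 :> R.
Proof.
rewrite -[RHS](@sum_delta R n (fun _ => 1) i); apply: eq_bigr => j _; by rewrite mul1r.
Qed.

Lemma quad0 (R : realType) (x y : R) :
  (forall t : R, 2 * t * x + t ^+ 2 * y <= 0) -> x = 0.
Proof.
move=> H; set d := `|y| + 1.
have dp : 0 < d by rewrite /d ltr_pwDr ?ltr01.
set t := x / d.
have xt : x = t * d by rewrite /t divfK // gt_eqF.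
have h := H t; rewrite xt in h.
have hy : - y <= `|y| by rewrite -normrN ler_norm.
have h2 : t ^+ 2 * (2 * d + y) <= 0.
  by have -> : t ^+ 2 * (2 * d + y) = 2 * t * (t * d) + t ^+ 2 * y by ring.
have ny := normr_ge0 y.
have p2 : 0 < 2 * d + y by rewrite /d; lra.
have : t ^+ 2 <= 0 by move: h2; rewrite pmulr_lle0.
rewrite xt; move=> ht; have t0 : t = 0.
  by apply/eqP; rewrite -sqrf_eq0 eq_le ht sqr_ge0.
by rewrite t0 mul0r.
Qed.

Lemma cont_sum (R : realType) n (F : 'I_n -> 'rV[R]_n -> R) :
  (forall i, continuous (F i)) -> continuous (fun r => \sum_i F i r).
Proof.
move=> cF.
have -> : (fun r => \sum_i F i r) = \sum_i F i by rewrite fct_sumE.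
apply: (big_ind (fun g : 'rV[R]_n -> R => continuous g)).
- exact: cst_continuous.
- by move=> f g cf cg x; apply: continuousD; [exact: cf | exact: cg].
- by move=> i _; exact: cF.
Qed.

Lemma cont_mul (R : realType) n (f g : 'rV[R]_n -> R) :
  continuous f -> continuous g -> continuous (fun r => f r * g r).
Proof. by move=> cf cg x; apply: continuousM; [exact: cf | exact: cg]. Qed.

Lemma cont_coord (R : realType) n (i : 'I_n) :
  continuous (fun r : 'rV[R]_n => r 0 i).
Proof. exact: coord_continuous. Qed.

Lemma rq_max (R : realType) n (A : 'M[R]_n) (S : {set 'I_n}) : (0 < #|S|)%N ->
  exists u : 'cV[R]_n, [/\ supported_on S u, \sum_i u i 0 ^+ 2 = 1 &
    forall w : 'cV[R]_n, supported_on S w ->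
      \sum_i w i 0 * (A *m w) i 0 <=
        (\sum_i u i 0 * (A *m u) i 0) * \sum_i w i 0 ^+ 2].
Proof.
move=> S0.
have box := @rV_compact R n (fun=> `[-1, 1]%classic) (fun=> @segment_compact R (-1) 1).
pose Q (r : 'rV[R]_n) := \sum_i r 0 i * \sum_j A i j * r 0 j.
pose N (r : 'rV[R]_n) := \sum_i r 0 i * r 0 i.
pose K : set 'rV[R]_n :=
  ((\bigcap_(i in [set i | i \notin S]) ((fun r : 'rV[R]_n => r 0 i) @^-1` [set 0]))
     `&` (N @^-1` [set 1]))%classic.
have Qc : continuous Q.
  apply: cont_sum => i; apply: cont_mul; first exact: cont_coord.
  apply: cont_sum => j; apply: cont_mul; [exact: cst_continuous | exact: cont_coord].
have Nc : continuous N by apply: cont_sum => i; apply: cont_mul; exact: cont_coord.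
have Kcl : closed K.
  apply: closedI.
    apply: closed_bigI => i _; apply: preimage_closed; last exact: closed_eq.
    by move=> x _; exact: cont_coord.
  apply: preimage_closed; last exact: closed_eq.
  by move=> x _; exact: Nc.
have Kc : compact K.
  apply: (subclosed_compact Kcl box).
  move=> r [_ Nr] i /=.
  have h : r 0 i * r 0 i <= 1.
    rewrite -Nr /N (bigD1 i) //= lerDl; apply: sumr_ge0 => j _.
    by rewrite -expr2; exact: sqr_ge0.
  rewrite (_ : r ord0 i = r 0 i) // in_itv /=; apply/andP; split; nra.
have [i0 i0S] : exists i0, i0 \in S by apply/set0Pn; rewrite -card_gt0.
pose r0 : 'rV[R]_n := \row_j (j == i0)%:R.
have K0 : K r0.
  split.
  - move=> i /= iS; rewrite mxE.
    have : i != i0 by apply: contraNneq iS => ->.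
    by move/negbTE => ->.
  - rewrite /= /N (bigD1 i0) //= big1 ?addr0; first by rewrite mxE eqxx mulr1.
    by move=> j /negbTE; rewrite mxE => ->; rewrite mulr0.
have cQ : {within K, continuous Q}%classic by apply: continuous_subspaceT.
have [r rK rmax] := @EVT_max_rV R n Q K (ex_intro _ r0 K0) Kc cQ.
move: rK; rewrite in_setE => -[rS rN].
pose u : 'cV[R]_n := r^T.
have QE : forall w : 'cV[R]_n, Q w^T = \sum_i w i 0 * (A *m w) i 0.
  move=> w; apply: eq_bigr => i _; rewrite !mxE; congr (_ * _).
  by apply: eq_bigr => j _; rewrite mxE.
have NE : forall w : 'cV[R]_n, N w^T = \sum_i w i 0 ^+ 2.
  by move=> w; apply: eq_bigr => i _; rewrite !mxE expr2.
have Qs : forall c t, Q (c *: t) = c ^+ 2 * Q t.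
  move=> c t; rewrite /Q mulr_sumr; apply: eq_bigr => i _; rewrite mxE.
  rewrite (eq_bigr (fun j => c * (A i j * t 0 j))); last first.
    by move=> j _; rewrite mxE; ring.
  rewrite -mulr_sumr; ring.
have Ns : forall c t, N (c *: t) = c ^+ 2 * N t.
  by move=> c t; rewrite /N mulr_sumr; apply: eq_bigr => i _; rewrite mxE; ring.
exists u; split.
- by move=> i iS; rewrite mxE; exact: (rS i iS).
- by rewrite -NE /u trmxK.
- move=> w sw; rewrite -!QE -NE /u trmxK.
  case: (eqVneq (N w^T) 0) => [Nz | Nnz].
    have w0 : forall i, w i 0 = 0.
      move=> i; apply/eqP; rewrite -sqrf_eq0; apply/eqP.
      move: Nz; rewrite NE => /psumr_eq0P; apply => // j _; exact: sqr_ge0.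
    rewrite Nz mulr0 QE big1 // => i _; by rewrite w0 mul0r.
  have Np : 0 < N w^T.
    by rewrite lt_def Nnz NE sumr_ge0 // => i _; exact: sqr_ge0.
  set k := Num.sqrt (N w^T).
  have kp : 0 < k by rewrite sqrtr_gt0.
  have tK : K (k^-1 *: w^T).
    split.
    - by move=> i /= iS; rewrite !mxE (sw i iS) mulr0.
    - by rewrite /= Ns exprVn sqr_sqrtr ?(ltW Np) // mulVf // gt_eqF.
  have := rmax _ (mem_set tK); rewrite Qs exprVn sqr_sqrtr ?(ltW Np) // => h.
  have := ler_wpM2l (ltW Np) h; rewrite mulrA mulfV ?gt_eqF // mul1r.
  by rewrite [X in _ <= X]mulrC.
Qed.

Lemma top_eig (R : realType) n (A : 'M[R]_n) (S : {set 'I_n}) :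
  (forall i j, A i j = A j i) -> (0 < #|S|)%N ->
  exists mu (u : 'cV[R]_n), is_sub_eigenpair A S mu u /\
    forall w : 'cV[R]_n, supported_on S w ->
      \sum_i w i 0 * (A *m w) i 0 <= mu * \sum_i w i 0 ^+ 2.
Proof.
move=> Asym S0; have [u [su u1 umax]] := rq_max A S0.
set mu := \sum_i u i 0 * (A *m u) i 0.
exists mu, u; split; last exact: umax.
split => //.
  apply/eqP => u0; move: u1; rewrite u0 big1; first by move/eqP; rewrite eq_sym oner_eq0.
  by move=> i _; rewrite mxE expr0n.
move=> i iS.
apply/eqP; rewrite -subr_eq0; apply/eqP.
apply: (@quad0 _ _ (A i i - mu)) => t.
pose d : 'cV[R]_n := \col_k (k == i)%:R.
pose w := u + t *: d.
have sw : supported_on S w.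
  move=> k kS; rewrite !mxE (su k kS) add0r.
  have : k != i by apply: contraNneq kS => ->.
  by move/negbTE => ->; rewrite mulr0.
have h := umax w sw.
have wE : forall k, w k 0 = u k 0 + t * (k == i)%:R by move=> k; rewrite !mxE.
have AwE : forall k, (A *m w) k 0 = (A *m u) k 0 + t * A k i.
  move=> k; rewrite mulmxDr -scalemxAr mxE [X in _ + X]mxE.
  congr (_ + _ * _); rewrite mxE.
  rewrite (eq_bigr (fun j => A k j * (j == i)%:R)) ?sum_delta // => j _.
  by rewrite mxE.
have Qw : \sum_k w k 0 * (A *m w) k 0 = mu + 2 * t * (A *m u) i 0 + t ^+ 2 * A i i.
  rewrite (eq_bigr (fun k => u k 0 * (A *m u) k 0 + t * (A i k * u k 0)
     + t * ((A *m u) k 0 * (k == i)%:R) + t ^+ 2 * (A i k * (k == i)%:R)));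
    last by move=> k _; rewrite wE AwE (Asym k i); ring.
  rewrite !big_split /= -!mulr_sumr !sum_delta -/mu.
  have -> : \sum_k A i k * u k 0 = (A *m u) i 0 by rewrite mxE.
  ring.
have Nw : \sum_k w k 0 ^+ 2 = 1 + 2 * t * u i 0 + t ^+ 2.
  rewrite (eq_bigr (fun k => u k 0 ^+ 2 + 2 * t * (u k 0 * (k == i)%:R)
     + t ^+ 2 * (1 * (k == i)%:R))); last first.
    move=> k _; rewrite wE.
    have bb : (k == i)%:R ^+ 2 = (k == i)%:R :> R.
      by case: (k == i); [exact: expr1n | exact: expr0n].
    have -> : (u k 0 + t * (k == i)%:R) ^+ 2 =
      u k 0 ^+ 2 + 2 * t * (u k 0 * (k == i)%:R) + t ^+ 2 * ((k == i)%:R ^+ 2) by ring.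
    by rewrite bb mul1r.
  rewrite !big_split /= -!mulr_sumr !sum_delta u1 sum_delta1; ring.
rewrite Qw Nw in h.
have -> : 2 * t * ((A *m u) i 0 - mu * u i 0) + t ^+ 2 * (A i i - mu) =
  (mu + 2 * t * (A *m u) i 0 + t ^+ 2 * A i i) - mu * (1 + 2 * t * u i 0 + t ^+ 2)
  by ring.
by rewrite subr_le0.
Qed.

Definition tsum (R : realType) n (v : 'cV[R]_n) (q : nat) : R :=
  \sum_(x <- take q (sorted_abs v)) x ^+ 2.

Lemma sorted_abs_size (R : realType) n (v : 'cV[R]_n) : size (sorted_abs v) = n.
Proof. by rewrite /sorted_abs size_sort size_map size_enum_ord. Qed.

Lemma sorted_abs_sorted (R : realType) n (v : 'cV[R]_n) :
  sorted (fun x y : R => y <= x) (sorted_abs v).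
Proof. apply: sort_sorted => x y; by rewrite orbC le_total. Qed.

Lemma sorted_abs_mem (R : realType) n (v : 'cV[R]_n) x :
  (x \in sorted_abs v) = (x \in [seq `|v i 0| | i <- enum 'I_n]).
Proof. by rewrite /sorted_abs mem_sort. Qed.

Lemma sorted_abs_ge0 (R : realType) n (v : 'cV[R]_n) x :
  x \in sorted_abs v -> 0 <= x.
Proof. by rewrite sorted_abs_mem => /mapP [i _ ->]. Qed.

Lemma sorted_abs_in (R : realType) n (v : 'cV[R]_n) i :
  `|v i 0| \in sorted_abs v.
Proof. by rewrite sorted_abs_mem; apply: map_f; rewrite mem_enum. Qed.

Lemma tsum_facts (R : realType) n (v : 'cV[R]_n) :
  (0 < n)%N -> norm2 v = 1 ->
  exists x, 0 < x /\ forall q, (0 < q)%N -> x ^+ 2 <= tsum v q /\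
     ((q < n)%N -> tsum v q.+1 <= tsum v q + x ^+ 2).
Proof.
move=> n0 nv.
have tr : transitive (fun x y : R => y <= x).
  by move=> y x z h1 h2; apply: le_trans h2 h1.
have sz := sorted_abs_size v; have so := sorted_abs_sorted v.
have ge0 := @sorted_abs_ge0 R n v.
rewrite /tsum.
have mem := sorted_abs_in v.
move: sz so ge0 mem; case: (sorted_abs v) => [|x s] sz so ge0 mem.
  by move: sz n0 => /= <-.
have mx : forall y, y \in x :: s -> y <= x.
  move=> y; rewrite inE => /orP [/eqP -> //|ys].
  by have := order_path_min tr so => /allP /(_ y ys).
have x0 : 0 <= x by apply: ge0; rewrite inE eqxx.
exists x; split.
  rewrite lt_def x0 andbT; apply/eqP => xz.
  have vz : forall i, v i 0 = 0.
    move=> i; have := mx _ (mem i).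
    by rewrite xz normr_le0 => /eqP.
  move: nv; rewrite /norm2 /normS big1 ?sqrtr0; first by move/eqP; rewrite eq_sym oner_eq0.
  by move=> i _; rewrite vz expr0n.
move=> [//|q] _; rewrite /= big_cons; split.
  by rewrite lerDl; apply: sumr_ge0 => y _; exact: sqr_ge0.
move=> qn.
have qs : (q < size s)%N by move: sz qn => /= <-.
rewrite (take_nth 0 qs) -cats1 big_cons big_cat big_seq1 /= addrA lerD2l.
have hm : nth 0 s q \in x :: s by rewrite inE mem_nth ?orbT.
have h1 := mx _ hm; have h0 := ge0 _ hm.
nra.
Qed.

Lemma tsum_set (R : realType) n (v : 'cV[R]_n) q : (q <= n)%N ->
  exists U : {set 'I_n}, #|U| = q /\ \sum_(i in U) v i 0 ^+ 2 = tsum v q.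
Proof.
move=> qn; rewrite /tsum /sorted_abs sort_map.
set idx := sort _ (enum 'I_n).
have ui : uniq idx by rewrite sort_uniq enum_uniq.
have si : size idx = n by rewrite size_sort size_enum_ord.
exists [set i in take q idx]; split.
  rewrite cardsE; move/card_uniqP: (take_uniq q ui) => ->.
  by rewrite size_takel // si.
rewrite -map_take big_map big_uniq ?take_uniq //.
apply: eq_big => i; first by rewrite inE.
by move=> _; rewrite real_normK ?num_real.
Qed.

Lemma top_ge (R : realType) n (a : 'cV[R]_n) q (T U : {set 'I_n}) :
  top_abs_set a q T -> #|U| = q ->
  \sum_(i in U) a i 0 ^+ 2 <= \sum_(i in T) a i 0 ^+ 2.
Proof.
move=> [cT top] cU.
have ctu : #|T :\: U| = #|U :\: T| by rewrite !cardsD cT cU finset.setIC.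
set k := #|U :\: T|.
have H : 0 <= \sum_(i in T :\: U) \sum_(j in U :\: T) (a i 0 ^+ 2 - a j 0 ^+ 2).
  apply: sumr_ge0 => i; rewrite inE => /andP [iU iT].
  apply: sumr_ge0 => j; rewrite inE => /andP [jT jU].
  rewrite subr_ge0.
  have h := top i j iT jT; have h0 := normr_ge0 (a j 0).
  rewrite -(real_normK (num_real (a i 0))) -(real_normK (num_real (a j 0))).
  nra.
have E : \sum_(i in T :\: U) \sum_(j in U :\: T) (a i 0 ^+ 2 - a j 0 ^+ 2) =
    k%:R * \sum_(i in T :\: U) a i 0 ^+ 2 - k%:R * \sum_(j in U :\: T) a j 0 ^+ 2.
  rewrite (eq_bigr (fun i => k%:R * a i 0 ^+2 - \sum_(j in U :\: T) a j 0 ^+ 2));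
    last by move=> i _; rewrite sumrB sumr_const -/k mulr_natl.
  by rewrite sumrB -mulr_sumr sumr_const ctu -/k !mulr_natl.
rewrite [X in X <= _](big_setID T) [X in _ <= X](big_setID U) finset.setIC lerD2l.
case: (posnP k) => [k0|kp].
  move/cards0_eq: k0 => ->; rewrite big_set0.
  by apply: sumr_ge0 => i _; exact: sqr_ge0.
rewrite E -mulrBr pmulr_rge0 ?subr_ge0 // in H.
by rewrite ltr0n.
Qed.

Lemma final_arith (R : realType) (th g tau y C d al tp : R) :
  0 < th -> 0 < g -> g < 1 -> 0 < tau -> 0 <= y -> 0 <= C -> 0 <= d ->
  th * al - 2 * d <= th * C ^+ 2 -> g ^+ 2 * tp <= al -> tau ^+ 2 <= 2 * tp ->
  th * C * (tau - y) <= 2 * d -> 8 * d <= th * g ^+ 2 * (1 - g) * tau ^+ 2 ->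
  g * tau <= y.
Proof.
move=> thp gp g1 tp0 y0 C0 d0 ha hal htp hb hc.
set Z := g ^+ 2 * tau ^+ 2.
have Zp : 0 < Z by rewrite /Z mulr_gt0 // exprn_gt0.
have e1 : th * (g ^+ 2 * tp) <= th * al by rewrite ler_pM2l.
have e2 : Z <= 2 * (g ^+ 2 * tp).
  have g2 : 0 <= g ^+ 2 by exact: sqr_ge0.
  by rewrite /Z; nra.
have e3 : 8 * d <= th * Z - th * Z * g.
  by move: hc; rewrite /Z; congr (_ <= _); ring.
have thZ : 0 <= th * Z * g.
  by apply: mulr_ge0; [apply: mulr_ge0|]; apply: ltW.
have s1 : th * Z <= 4 * (th * C ^+ 2).
  have : th * Z <= 2 * (th * (g ^+ 2 * tp)).
    by nra.
  lra.
have s1' : Z <= 4 * C ^+ 2.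
  by nra.
have s2 : g * tau <= 2 * C.
  have gt0 : 0 < g * tau by rewrite mulr_gt0.
  move: s1'; rewrite /Z => s1'; nra.
rewrite leNgt; apply/negP => yl.
have h1 : (1 - g) * tau <= tau - y by lra.
have h2 : th * C * ((1 - g) * tau) <= th * C * (tau - y).
  by rewrite ler_wpM2l // mulr_ge0 // ltW.
have h3 : th * C * ((1 - g) * tau) * 4 <= th * Z * (1 - g).
  by move: e3 h2 hb; rewrite /Z; nra.
have h4 : 2 * C <= g ^+ 2 * tau.
  have p1 : 0 < th * (1 - g) * tau by rewrite mulr_gt0 // mulr_gt0 // subr_gt0.
  have : th * (1 - g) * tau * (4 * C) <= th * (1 - g) * tau * (g ^+ 2 * tau).
    by move: h3; rewrite /Z; congr (_ <= _); ring.
  rewrite ler_pM2l // => h; nra.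
have : g * tau <= g ^+ 2 * tau by lra.
rewrite expr2 -mulrA ler_pM2l // => h.
have : g * tau < 1 * tau by rewrite ltr_pM2r.
rewrite mul1r; lra.
Qed.

Lemma G_entry (R : realType) n m (th : R) (v : 'cV[R]_n) (x : 'I_m -> 'cV[R]_n)
  (u : 'cV[R]_n) i :
  (Gamma_hat x *m u) i 0 =
  (W_mat th v x *m u) i 0 + th * v i 0 * \sum_j v j 0 * u j 0.
Proof.
have -> : Gamma_hat x = W_mat th v x + th *: (v *m v^T) by rewrite /W_mat subrK.
rewrite mulmxDl -scalemxAl -mulmxA !mxE big_ord1 !mxE mulrA.
congr (_ + _ * _); apply: eq_bigr => j _; by rewrite mxE.
Qed.

Lemma G_sym (R : realType) n m (x : 'I_m -> 'cV[R]_n) i j :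
  Gamma_hat x i j = Gamma_hat x j i.
Proof.
rewrite /Gamma_hat !mxE eq_sym; congr (_ * _ - _); rewrite !summxE.
by apply: eq_bigr => k _; rewrite !mxE !big_ord1 !mxE mulrC.
Qed.

Lemma sq_le (R : realType) (a b : R) : 0 <= b -> a ^+ 2 <= b ^+ 2 -> a <= b.
Proof.
move=> b0 h; apply: le_trans (ler_norm a) _.
by rewrite -[b]ger0_norm // -!sqrtr_sqr ler_sqrt // sqr_ge0.
Qed.

Theorem proposition4 (R : realType) (C0 : R) :
  0 < C0 ->
  exists C : R, 0 < C /\
  forall (n m k p : nat) (theta gamma : R) (v : 'cV[R]_n)
         (x : 'I_m -> 'cV[R]_n) (Sp Sp1 : {set 'I_n}) (e : 'cV[R]_n),
    (2 <= n)%N -> (1 <= m)%N -> 0 < theta -> (1 <= k <= n)%N ->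
    norm2 v = 1 -> (nnz v <= k)%N ->
    event_E C0 theta v x ->
    (1 <= p)%N -> (p < k)%N -> 0 < gamma < 1 ->
    #|Sp| = p ->
    top_sub_eigvec (Gamma_hat x) Sp e ->
    top_abs_set (Gamma_hat x *m e) p.+1 Sp1 ->
    C * (1 + theta) ^+ 2 / (theta ^+ 2 * gamma ^+ 2 * (1 - Num.sqrt gamma) ^+ 2)
      * (p.+1)%:R * s_fun v p.+1 ^+ 2 * ln (n%:R : R) <= m%:R ->
    Num.sqrt (gamma / s_fun v p) <= normS Sp v ->
    Num.sqrt (gamma / s_fun v p.+1) <= normS Sp1 v.
Proof.
move=> C0p; exists (128 * C0 ^+ 2); split; first by rewrite mulr_gt0 // exprn_gt0.
move=> n m k p th ga v x Sp Sp1 e n2 m1 thp /andP [k1 kn] nv nnzv hE p1 pk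
  /andP [ga0 ga1] cSp [ne [lam [[se ene eig] lamtop]]] hT hm hv.
have n0 : (0 < n)%N by clear - n2; lia.
have pn : (p.+1 <= n)%N by clear - pk kn; lia.
have Lp : 0 < ln (n%:R : R) by apply: ln_gt0; rewrite ltr1n.
have mp : 0 < (m%:R : R) by rewrite ltr0n.
set L := ln (n%:R : R) in hE hm Lp *.
set W := W_mat th v x.
set d := C0 * (1 + th) * Num.sqrt ((2 * p).+1%:R * L / m%:R).
have c1 : 0 <= C0 * (1 + th) by rewrite mulr_ge0 ?ltW // addr_gt0.
have d0 : 0 <= d by rewrite mulr_ge0 // sqrtr_ge0.
have specd : forall S : {set 'I_n}, (0 < #|S|)%N -> (#|S| <= (2 * p).+1)%N ->
    spec_norm_sub W S <= d.
  move=> S S0 Sle; apply: le_trans (hE S S0) _.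
  rewrite /d; apply: ler_wpM2l => //; rewrite ler_sqrt; last first.
    by rewrite mulr_ge0 ?invr_ge0 ?mulr_ge0 ?ltW.
  apply: ler_wpM2r; first by rewrite invr_ge0 ltW.
  apply: ler_wpM2r; first exact: ltW.
  by rewrite ler_nat.
have [x0 [x0p hx]] := tsum_facts n0 nv.
have [hxp hsucc] := hx p p1.
have [hxq _] := hx p.+1 isT.
have := hsucc (leq_trans pk kn) => {}hsucc.
set tp := tsum v p in hxp hsucc *.
set tq := tsum v p.+1 in hxq hsucc *.
have x02 : 0 < x0 ^+ 2 by rewrite exprn_gt0.
have tqp : 0 < tq by apply: lt_le_trans hxq.
have tpp : 0 < tp by apply: lt_le_trans hxp.
have tq2 : tq <= 2 * tp by clear - hsucc hxp; lra.
have [U [cU hU]] := tsum_set v pn.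
have sE : forall q, s_fun v q = (tsum v q)^-1 by [].
rewrite sE invrK -/tp in hv; rewrite sE invrK -/tq.
set al := \sum_(i in Sp) v i 0 ^+ 2.
have al0 : 0 <= al by apply: sumr_ge0 => i _; exact: sqr_ge0.
rewrite /normS -/al ler_sqrt // in hv.
set g := Num.sqrt ga in hm *.
have gp : 0 < g by rewrite sqrtr_gt0.
have g1 : g < 1 by rewrite -sqrtr1 ltr_sqrt.
have gg : g ^+ 2 = ga by rewrite sqr_sqrtr ?ltW.
set tau := Num.sqrt tq.
have taup : 0 < tau by rewrite sqrtr_gt0.
have tt : tau ^+ 2 = tq by rewrite sqr_sqrtr ?ltW.
rewrite sqrtrM; last exact: ltW.
rewrite -/g -/tau.
set y := normS Sp1 v.
set c := \sum_j v j 0 * e j 0.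
have alp : 0 < al by apply: lt_le_trans hv; rewrite mulr_gt0.
have Sp0 : (0 < #|Sp|)%N by rewrite cSp.
have sd : spec_norm_sub W Sp <= d by apply: specd; rewrite cSp //; clear - p1; lia.
have ha : th * al - 2 * d <= th * `|c| ^+ 2.
  have Gsym : forall i j, Gamma_hat x i j = Gamma_hat x j i.
    by move=> i j; exact: G_sym.
  have [mu [u [eigu umax]]] := top_eig Gsym Sp0.
  have lmu := lamtop mu u eigu.
  pose w : 'cV[R]_n := \col_i ((i \in Sp)%:R * v i 0).
  have sw : supported_on Sp w by move=> i iS; rewrite mxE (negbTE iS) mul0r.
  have wS : forall i, i \in Sp -> w i 0 = v i 0 by move=> i iS; rewrite mxE iS mul1r.
  have ww : \sum_i w i 0 ^+ 2 = al.
    rewrite -(@sum_in_supp _ _ Sp); last by move=> i /sw ->; rewrite expr0n.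
    by apply: eq_bigr => i iS; rewrite wS.
  have vw : \sum_j v j 0 * w j 0 = al.
    rewrite -(@sum_in_supp _ _ Sp); last by move=> i /sw ->; rewrite mulr0.
    by apply: eq_bigr => i iS; rewrite wS // expr2.
  have hq := umax w sw; rewrite ww in hq.
  have Qw : \sum_i w i 0 * (Gamma_hat x *m w) i 0 =
      \sum_i w i 0 * (W *m w) i 0 + th * al ^+ 2.
    rewrite (eq_bigr (fun i => w i 0 * (W *m w) i 0 + th * al * (v i 0 * w i 0)));
      last by move=> i _; rewrite (G_entry th v) vw; ring.
    by rewrite big_split /= -mulr_sumr vw expr2 mulrA.
  rewrite Qw in hq.
  have qw := qf_bound W sw; rewrite norm2_sq ww in qw.
  have hw : - (d * al) <= \sum_i w i 0 * (W *m w) i 0.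
    have h1 : - (\sum_i w i 0 * (W *m w) i 0) <= `|\sum_i w i 0 * (W *m w) i 0|.
      by rewrite -normrN ler_norm.
    have h2 : spec_norm_sub W Sp * al <= d * al by rewrite ler_wpM2r.
    clear - h1 h2 qw; lra.
  have h3 : th * al ^+ 2 - d * al <= lam * al.
    have h5 := ler_wpM2r al0 lmu; clear - h5 hq hw; lra.
  have h4 : th * al - d <= lam.
    rewrite -(ler_pM2r alp).
    by have -> : (th * al - d) * al = th * al ^+ 2 - d * al by ring.
  have eq1 : \sum_i e i 0 * (Gamma_hat x *m e) i 0 = lam.
    rewrite (eq_bigr (fun i => lam * e i 0 ^+ 2)); last first.
      move=> i _; case: (boolP (i \in Sp)) => iS; first by rewrite eig //; ring.
      by rewrite (se i iS) mul0r expr0n mulr0.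
    by rewrite -mulr_sumr -norm2_sq ne expr1n mulr1.
  have eq2 : \sum_i e i 0 * (Gamma_hat x *m e) i 0 =
      \sum_i e i 0 * (W *m e) i 0 + th * c ^+ 2.
    rewrite (eq_bigr (fun i => e i 0 * (W *m e) i 0 + th * c * (v i 0 * e i 0)));
      last by move=> i _; rewrite (G_entry th v) -/c; ring.
    by rewrite big_split /= -mulr_sumr -/c expr2 mulrA.
  have qe := qf_bound W se; rewrite ne expr1n mulr1 in qe.
  have he : \sum_i e i 0 * (W *m e) i 0 <= d.
    exact: le_trans (ler_norm _) (le_trans qe sd).
  rewrite real_normK ?num_real //.
  clear - h4 eq1 eq2 he; lra.
have hb : th * `|c| * (tau - y) <= 2 * d.
  set a := Gamma_hat x *m e in hT *.
  have aE : forall i, a i 0 = (W *m e) i 0 + ((th * c) *: v) i 0.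
    by move=> i; rewrite /a (G_entry th v) -/c -/W [((th * c) *: v) i 0]mxE; ring.
  have hTU := top_ge hT cU.
  have nUa : normS U a <= normS Sp1 a.
    by rewrite /normS ler_sqrt // sumr_ge0 // => i _; exact: sqr_ge0.
  have up : normS Sp1 a <= normS Sp1 (W *m e) + normS Sp1 ((th * c) *: v).
    rewrite /normS (eq_bigr (fun i => ((W *m e) i 0 + ((th * c) *: v) i 0) ^+ 2));
      last by move=> i _; rewrite aE.
    exact: (@mink_sum _ _ (fun i => i \in Sp1) (fun i => (W *m e) i 0)
       (fun i => ((th * c) *: v) i 0)).
  have lo : normS U ((th * c) *: v) <= normS U a + normS U (W *m e).
    have -> : normS U (W *m e) = Num.sqrt (\sum_(i in U) (- (W *m e) i 0) ^+ 2).
      by rewrite /normS; congr Num.sqrt; apply: eq_bigr => i _; rewrite sqrrN.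
    rewrite /normS (eq_bigr (fun i => (a i 0 + - (W *m e) i 0) ^+ 2));
      last by move=> i _; rewrite aE addrAC subrr add0r.
    exact: (@mink_sum _ _ (fun i => i \in U) (fun i => a i 0)
       (fun i => - (W *m e) i 0)).
  have sUp : forall T : {set 'I_n}, supported_on (T :|: Sp) e.
    by move=> T i; rewrite inE negb_or => /andP [_ /se].
  have Wb : forall T : {set 'I_n}, #|T| = p.+1 -> normS T (W *m e) <= d.
    move=> T cT.
    apply: le_trans (normS_sub (W *m e) (finset.subsetUl T Sp)) _.
    apply: le_trans (spec_ub_gen W (sUp T)) _; rewrite ne mulr1.
    apply: specd.
      by apply: leq_trans (subset_leq_card (finset.subsetUl T Sp)); rewrite cT.
    by apply: leq_trans (leq_card_setU T Sp).1 _; rewrite cT cSp; clear - p1; lia.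
  have WU := Wb U cU.
  have WS := Wb Sp1 hT.1.
  have nthc : `|th * c| = th * `|c| by rewrite normrM gtr0_norm.
  have e1 : normS U ((th * c) *: v) = th * `|c| * tau.
    by rewrite normS_scale nthc /normS hU.
  have e2 : normS Sp1 ((th * c) *: v) = th * `|c| * y.
    by rewrite normS_scale nthc.
  rewrite e1 in lo; rewrite e2 in up.
  have -> : th * `|c| * (tau - y) = th * `|c| * tau - th * `|c| * y by ring.
  clear - lo up nUa WU WS; lra.
have hc : 8 * d <= th * g ^+ 2 * (1 - g) * tau ^+ 2.
  rewrite sE -/tq in hm.
  have g1' : 0 < 1 - g by rewrite subr_gt0.
  have Dp : 0 < th ^+ 2 * ga ^+ 2 * (1 - g) ^+ 2.
    by rewrite !mulr_gt0 // exprn_gt0.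
  have DT : 0 < th ^+ 2 * ga ^+ 2 * (1 - g) ^+ 2 * tq ^+ 2.
    by rewrite mulr_gt0 // exprn_gt0.
  have hm2 : 128 * C0 ^+ 2 * (1 + th) ^+ 2 * p.+1%:R * L <=
      m%:R * (th ^+ 2 * ga ^+ 2 * (1 - g) ^+ 2 * tq ^+ 2).
    rewrite -(ler_pM2r DT) in hm.
    have E : 128 * C0 ^+ 2 * (1 + th) ^+ 2 / (th ^+ 2 * ga ^+ 2 * (1 - g) ^+ 2) *
        p.+1%:R * tq^-1 ^+ 2 * L * (th ^+ 2 * ga ^+ 2 * (1 - g) ^+ 2 * tq ^+ 2) =
        128 * C0 ^+ 2 * (1 + th) ^+ 2 * p.+1%:R * L.
      field; by rewrite (gt_eqF tqp) (gt_eqF g1') (gt_eqF ga0) (gt_eqF thp).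
    by rewrite -E.
  have hP : ((2 * p).+1%:R : R) <= 2 * (p.+1)%:R by rewrite -natrM ler_nat; clear - p1; lia.
  have K0 : 0 <= C0 ^+ 2 * (1 + th) ^+ 2 * L.
    by apply: mulr_ge0; [apply: mulr_ge0; exact: sqr_ge0 | exact: ltW].
  have dsq : d ^+ 2 = C0 ^+ 2 * (1 + th) ^+ 2 * ((2 * p).+1%:R * L / m%:R).
    rewrite /d !exprMn sqr_sqrtr //.
    apply: mulr_ge0; last by rewrite invr_ge0 ler0n.
    by apply: mulr_ge0; [exact: ler0n | exact: ltW].
  have hd2 : 64 * d ^+ 2 <= th ^+ 2 * ga ^+ 2 * (1 - g) ^+ 2 * tq ^+ 2.
    rewrite dsq -(ler_pM2r mp).
    have -> : 64 * (C0 ^+ 2 * (1 + th) ^+ 2 * ((2 * p).+1%:R * L / m%:R)) * m%:R =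
        64 * (C0 ^+ 2 * (1 + th) ^+ 2 * L) * (2 * p).+1%:R.
      by field; rewrite gt_eqF.
    have h6 := ler_wpM2l K0 hP.
    rewrite [X in _ <= X]mulrC.
    clear - h6 hm2; nra.
  apply: sq_le.
    apply: mulr_ge0; last exact: sqr_ge0.
    apply: mulr_ge0; last exact: ltW.
    by apply: mulr_ge0; [exact: ltW | exact: sqr_ge0].
  have -> : (th * g ^+ 2 * (1 - g) * tau ^+ 2) ^+ 2 =
    th ^+ 2 * (g ^+ 2) ^+ 2 * (1 - g) ^+ 2 * (tau ^+ 2) ^+ 2 by ring.
  rewrite gg tt.
  have -> : (8 * d) ^+ 2 = 64 * d ^+ 2 by ring.
  exact: hd2.
have hal : g ^+ 2 * tp <= al by rewrite gg.
have htp : tau ^+ 2 <= 2 * tp by rewrite tt.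
exact: (final_arith thp gp g1 taup (sqrtr_ge0 _) (normr_ge0 c) d0 ha hal htp hb hc).
Qed.
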